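(* Assume the standing assumptions and, in addition, that $f$ is $\rho$-strongly convex for some $\rho>0$. Suppose $(D)$ has an optimal solution $p^*$ (a minimizer of $\theta$) with $\|p^*\|\le R$, $R>0$. Let $\kappa>0$ and let $(p_k)_{k\ge0}$ be generated by the fast gradient method applied to $\theta_\kappa$. Then for all $k\ge0$, $$\theta(p_k)-\theta(p^* )\le\frac\kappa2R^2+\frac{25}{8}\bigl(\theta(0)-\theta(p^* )\bigr)e^{-\frac k2\sqrt{\kappa/L(\kappa)}},$$ $$\|\nabla\theta(p_k)\|\le 2\sqrt{L(\kappa)\bigl(\theta(0)-\theta(p^* )\bigr)}\,e^{-\frac k2\sqrt{\kappa/L(\kappa)}}+2\kappa R .$$
   Context: Standing assumptions: $\mathcal{H}$ is a real Hilbert space; $f:\mathcal{H}\to\mathbb{R}\cup\{+\infty\}$ is proper, convex, lower semicontinuous with bounded effective domain; $g:\mathbb{R}^m\to\mathbb{R}\cup\{+\infty\}$ is proper, lower semicontinuous and $\mu$-strongly convex for some $\mu>0$; $A:\mathcal{H}\to\mathbb{R}^m$ is linear and continuous with $A(\operatorname{dom} f)\cap\operatorname{dom} g\neq\emptyset$. $(D)$ is $\sup_p\{-f^*(A^*p)-g^*(-p)\}$. $\theta(p):=f^*(A^*p)+g^*(-p)$ (differentiable here). $\theta_\kappa(p):=\theta(p)+\frac\kappa2\|p\|^2$, and $L(\kappa):=\frac{\|A\|^2}{\rho}+\frac1\mu+\kappa$ (a Lipschitz constant of $\nabla\theta_\kappa$). Fast gradient method on $\theta_\kappa$: $w_0=p_0=0$,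 $p_{k+1}=w_k-\frac{1}{L(\kappa)}\nabla\theta_\kappa(w_k)$, $w_{k+1}=p_{k+1}+\frac{\sqrt{L(\kappa)}-\sqrt\kappa}{\sqrt{L(\kappa)}+\sqrt\kappa}(p_{k+1}-p_k)$. *)

(* Defs.v *)
From Stdlib Require Import Reals Lra ClassicalEpsilon.
From Stdlib Require Vectors.Fin.
Open Scope R_scope.

Record IPS := {
  car :> Type;
  vadd : car -> car -> car;
  vzero : car;
  vopp : car -> car;
  vscal : R -> car -> car;
  inner : car -> car -> R
}.
Arguments vadd {i}. Arguments vzero {i}. Arguments vopp {i}.
Arguments vscal {i}. Arguments inner {i}.

Definition vsub {V : IPS} (x y : V) : V := vadd x (vopp y).
Definition nrm {V : IPS} (x : V) : R := sqrt (inner x x).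

Definition converges {V : IPS} (u : nat -> V) (x : V) : Prop :=
  forall eps, 0 < eps -> exists N, forall n, (N <= n)%nat -> nrm (vsub (u n) x) < eps.

Definition cauchy {V : IPS} (u : nat -> V) : Prop :=
  forall eps, 0 < eps -> exists N, forall n k, (N <= n)%nat -> (N <= k)%nat ->
    nrm (vsub (u n) (u k)) < eps.

Definition is_real_hilbert (V : IPS) : Prop :=
  (forall x y z : V, vadd x (vadd y z) = vadd (vadd x y) z) /\
  (forall x y : V, vadd x y = vadd y x) /\
  (forall x : V, vadd x vzero = x) /\
  (forall x : V, vadd x (vopp x) = vzero) /\
  (forall (a b : R) (x : V), vscal a (vscal b x) = vscal (a * b) x) /\
  (forall x : V, vscal 1 x = x) /\
  (forall (a : R) (x y : V), vscal a (vadd x y) = vadd (vscal a x) (vscal a y)) /\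
  (forall (a b : R) (x : V), vscal (a + b) x = vadd (vscal a x) (vscal b x)) /\
  (forall x y : V, inner x y = inner y x) /\
  (forall x y z : V, inner (vadd x y) z = inner x z + inner y z) /\
  (forall (a : R) (x y : V), inner (vscal a x) y = a * inner x y) /\
  (forall x : V, 0 <= inner x x) /\
  (forall x : V, inner x x = 0 -> x = vzero) /\
  (forall u : nat -> V, cauchy u -> exists x, converges u x).

Fixpoint fsum (m : nat) : (Fin.t m -> R) -> R :=
  match m with
  | O => fun _ => 0
  | S n => fun f => f Fin.F1 + fsum n (fun i => f (Fin.FS i))
  end.

Definition Euclid (m : nat) : IPS := {|
  car := Fin.t m -> R;
  vadd := fun u v i => u i + v i;
  vzero := fun _ => 0;
  vopp := fun u i => - u i;
  vscal := fun a u i => a * u i;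
  inner := fun u v => fsum m (fun i => u i * v i)
|}.

(** Supremum of a set of reals (meaningful when the set is nonempty and
    bounded above, which is the case wherever it is used below). *)
Definition Rsup (E : R -> Prop) : R :=
  epsilon (inhabits 0) (fun s => is_lub E s).

(** Extended reals R ∪ {+∞}. *)
Inductive ER := ERfin (r : R) | ERinf.

Definition dom {V : IPS} (f : V -> ER) (x : V) : Prop := exists a, f x = ERfin a.

Definition proper {V : IPS} (f : V -> ER) : Prop := exists x, dom f x.

Definition convex {V : IPS} (f : V -> ER) : Prop :=
  forall (x y : V) (l a b : R), 0 < l < 1 -> f x = ERfin a -> f y = ERfin b ->
    exists c, f (vadd (vscal l x) (vscal (1 - l) y)) = ERfin c /\
              c <= l * a + (1 - l) * b.

(** rho-strong convexity (equivalently: f - rho/2 ||.||^2 convex). *)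
Definition strongly_convex {V : IPS} (rho : R) (f : V -> ER) : Prop :=
  forall (x y : V) (l a b : R), 0 < l < 1 -> f x = ERfin a -> f y = ERfin b ->
    exists c, f (vadd (vscal l x) (vscal (1 - l) y)) = ERfin c /\
              c <= l * a + (1 - l) * b - rho / 2 * l * (1 - l) * (nrm (vsub x y)) ^ 2.

(** Lower semicontinuity (norm topology): all sublevel sets are
    (sequentially) closed. *)
Definition lsc {V : IPS} (f : V -> ER) : Prop :=
  forall (u : nat -> V) (x : V) (t : R), converges u x ->
    (forall n, exists a, f (u n) = ERfin a /\ a <= t) ->
    exists a, f x = ERfin a /\ a <= t.

Definition bounded_dom {V : IPS} (f : V -> ER) : Prop :=
  exists M, forall x, dom f x -> nrm x <= M.

Definition linear_map {U V : IPS} (A : U -> V) : Prop :=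
  (forall x y, A (vadd x y) = vadd (A x) (A y)) /\
  (forall a x, A (vscal a x) = vscal a (A x)).

Definition continuous_map {U V : IPS} (A : U -> V) : Prop :=
  forall u x, converges u x -> converges (fun n => A (u n)) (A x).

Definition is_adjoint {U V : IPS} (A : U -> V) (As : V -> U) : Prop :=
  forall x p, inner (A x) p = inner x (As p).

Definition op_norm {U V : IPS} (A : U -> V) : R :=
  Rsup (fun r => exists x, nrm x <= 1 /\ r = nrm (A x)).

Definition fconj {V : IPS} (f : V -> ER) (y : V) : R :=
  Rsup (fun r => exists x a, f x = ERfin a /\ r = inner y x - a).

Definition has_gradient {m : nat} (th : Euclid m -> R) (p v : Euclid m) : Prop :=
  forall eps, 0 < eps -> exists delta, 0 < delta /\
    forall h : Euclid m, 0 < nrm h < delta ->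
      Rabs (th (vadd p h) - th p - inner v h) <= eps * nrm h.

Definition grad {m : nat} (th : Euclid m -> R) (p : Euclid m) : Euclid m :=
  epsilon (inhabits (fun _ => 0)) (has_gradient th p).

Definition theta {H : IPS} {m : nat} (f : H -> ER) (g : Euclid m -> ER)
  (As : Euclid m -> H) (p : Euclid m) : R :=
  fconj f (As p) + fconj g (vopp p).

Definition theta_k {H : IPS} {m : nat} (f : H -> ER) (g : Euclid m -> ER)
  (As : Euclid m -> H) (kappa : R) (p : Euclid m) : R :=
  theta f g As p + kappa / 2 * (nrm p) ^ 2.

Definition Lk {H : IPS} {m : nat} (A : H -> Euclid m) (rho mu kappa : R) : R :=
  (op_norm A) ^ 2 / rho + 1 / mu + kappa.

Definition fgm_iterates {H : IPS} {m : nat} (f : H -> ER) (g : Euclid m -> ER)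
  (A : H -> Euclid m) (As : Euclid m -> H) (rho mu kappa : R)
  (p w : nat -> Euclid m) : Prop :=
  let L := Lk A rho mu kappa in
  p O = vzero /\ w O = vzero /\
  (forall k, p (S k) = vsub (w k) (vscal (1 / L) (grad (theta_k f g As kappa) (w k)))) /\
  (forall k, w (S k) = vadd (p (S k))
      (vscal ((sqrt L - sqrt kappa) / (sqrt L + sqrt kappa)) (vsub (p (S k)) (p k)))).

(* Main.v *)
Require Import Defs.
From Stdlib Require Import Reals.
From Stdlib Require Import Lra Lia ClassicalEpsilon FunctionalExtensionality Classical Rcomplete.
Open Scope R_scope.

Set Default Proof Using "All".
Section Gen.
Variable V : IPS.
Hypothesis hV : is_real_hilbert V.

Lemma inner_sym : forall x y : V, inner x y = inner y x.
Proof. destruct hV as (_&_&_&_&_&_&_&_&h&_). exact h. Qed.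
Lemma inner_addl : forall x y z : V, inner (vadd x y) z = inner x z + inner y z.
Proof. destruct hV as (_&_&_&_&_&_&_&_&_&h&_). exact h. Qed.
Lemma inner_scall : forall (a : R) (x y : V), inner (vscal a x) y = a * inner x y.
Proof. destruct hV as (_&_&_&_&_&_&_&_&_&_&h&_). exact h. Qed.
Lemma inner_pos : forall x : V, 0 <= inner x x.
Proof. destruct hV as (_&_&_&_&_&_&_&_&_&_&_&h&_). exact h. Qed.
Lemma inner_zero_eq : forall x : V, inner x x = 0 -> x = vzero.
Proof. destruct hV as (_&_&_&_&_&_&_&_&_&_&_&_&h&_). exact h. Qed.
Lemma complete : forall u : nat -> V, cauchy u -> exists x, converges u x.
Proof. destruct hV as (_&_&_&_&_&_&_&_&_&_&_&_&_&h). exact h. Qed.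
Lemma vadd_0 : forall x : V, vadd x vzero = x.
Proof. destruct hV as (_&_&h&_). exact h. Qed.
Lemma vadd_opp : forall x : V, vadd x (vopp x) = vzero.
Proof. destruct hV as (_&_&_&h&_). exact h. Qed.
Lemma vadd_comm : forall x y : V, vadd x y = vadd y x.
Proof. destruct hV as (_&h&_). exact h. Qed.

Lemma inner_addr : forall x y z : V, inner z (vadd x y) = inner z x + inner z y.
Proof. intros. rewrite inner_sym, inner_addl, (inner_sym x), (inner_sym y). ring. Qed.
Lemma inner_scalr : forall (a : R) (x y : V), inner y (vscal a x) = a * inner y x.
Proof. intros. rewrite inner_sym, inner_scall, inner_sym. ring. Qed.
Lemma inner_zerol : forall y : V, inner vzero y = 0.
Proof. intros. assert (h := inner_addl vzero vzero y). rewrite vadd_0 in h. lra. Qed.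
Lemma inner_zeror : forall y : V, inner y vzero = 0.
Proof. intros. rewrite inner_sym. apply inner_zerol. Qed.
Lemma inner_oppl : forall x y : V, inner (vopp x) y = - inner x y.
Proof. intros. assert (h := inner_addl x (vopp x) y). rewrite vadd_opp, inner_zerol in h. lra. Qed.
Lemma inner_oppr : forall x y : V, inner y (vopp x) = - inner y x.
Proof. intros. rewrite inner_sym, inner_oppl, inner_sym. ring. Qed.

Lemma inner_subl : forall x y z : V, inner (vsub x y) z = inner x z - inner y z.
Proof. intros. unfold vsub. rewrite inner_addl, inner_oppl. ring. Qed.
Lemma inner_subr : forall x y z : V, inner z (vsub x y) = inner z x - inner z y.
Proof. intros. unfold vsub. rewrite inner_addr, inner_oppr. ring. Qed.
Lemma nrm_sq : forall x : V, nrm x ^ 2 = inner x x.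
Proof. intros. unfold nrm. apply pow2_sqrt, inner_pos. Qed.
Lemma nrm_nonneg : forall x : V, 0 <= nrm x.
Proof. intros. apply sqrt_pos. Qed.
Lemma nrm_zero : nrm (@vzero V) = 0.
Proof. unfold nrm. rewrite inner_zerol. apply sqrt_0. Qed.

Lemma nrm_le_sq : forall (x : V) r, 0 <= r -> inner x x <= r ^ 2 -> nrm x <= r.
Proof. intros. unfold nrm. rewrite <- (sqrt_pow2 r H). apply sqrt_le_1_alt. lra. Qed.
Lemma nrm_lt_sq : forall (x : V) r, 0 <= r -> inner x x < r ^ 2 -> nrm x < r.
Proof. intros. unfold nrm. rewrite <- (sqrt_pow2 r H). apply sqrt_lt_1_alt. split. apply inner_pos. lra. Qed.
Lemma sq_le_nrm : forall (x : V) r, nrm x <= r -> inner x x <= r ^ 2.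
Proof. intros. rewrite <- nrm_sq. pose proof (nrm_nonneg x). nra. Qed.

Lemma cauchy_schwarz : forall x y : V, inner x y <= nrm x * nrm y.
Proof.
  intros x y.
  destruct (Req_dec (inner x x) 0) as [h0|h0].
  - rewrite (inner_zero_eq x h0), inner_zerol, nrm_zero. lra.
  - pose proof (inner_pos x). pose proof (inner_pos y).
    assert (hx : 0 < inner x x) by lra.
    set (t := inner x y / inner x x).
    assert (hp := inner_pos (vadd y (vscal (- t) x))).
    rewrite inner_addl, !inner_addr, !inner_scall, !inner_scalr, (inner_sym x y) in hp.
    assert (hsq : inner x y ^ 2 <= inner x x * inner y y).
    { assert (ht : t * inner x x = inner x y) by (unfold t; field; lra).
      clearbody t.
      assert (h1 : 0 <= inner y y - t * inner x y). { rewrite (inner_sym y x) in hp. assert (t * (t * inner x x) = t * inner x y) by (rewrite ht; ring). lra. }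
      assert (h2 : 0 <= inner x x * (inner y y - t * inner x y)) by (apply Rmult_le_pos; lra).
      nra. }
    assert (hn : 0 <= nrm x * nrm y) by (apply Rmult_le_pos; apply nrm_nonneg).
    assert (hh : (nrm x * nrm y) ^ 2 = inner x x * inner y y) by (rewrite Rpow_mult_distr, !nrm_sq; ring).
    nra.
Qed.

Lemma nrm_opp : forall x : V, nrm (vopp x) = nrm x.
Proof. intros. unfold nrm. rewrite inner_oppl, inner_oppr, Ropp_involutive. reflexivity. Qed.
Lemma cs_abs : forall x y : V, Rabs (inner x y) <= nrm x * nrm y.
Proof.
  intros. apply Rabs_le. split.
  - assert (h := cauchy_schwarz (vopp x) y). rewrite inner_oppl, nrm_opp in h. lra.
  - apply cauchy_schwarz.
Qed.

Lemma young : forall (d e : V) r, 0 < r -> inner d e - r / 2 * inner e e <= inner d d / (2 * r).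
Proof.
  intros. assert (hp := inner_pos (vadd d (vscal (- r) e))).
  rewrite inner_addl, !inner_addr, !inner_scall, !inner_scalr, (inner_sym e d) in hp.
  apply Rmult_le_reg_l with (r := 2 * r). lra. field_simplify; try lra.
Qed.
End Gen.

Ltac iexp hv :=
  repeat progress (rewrite ?(inner_subl _ hv), ?(inner_subr _ hv), ?(inner_addl _ hv), ?(inner_addr _ hv), ?(inner_scall _ hv),
     ?(inner_scalr _ hv), ?(inner_oppl _ hv), ?(inner_oppr _ hv), ?(inner_zerol _ hv), ?(inner_zeror _ hv)).

Lemma Rdiv_le_0_compat : forall a b, 0 <= a -> 0 < b -> 0 <= a / b.
Proof. intros. unfold Rdiv. apply Rmult_le_pos; auto. left. apply Rinv_0_lt_compat; auto. Qed.
Lemma Rdiv_lt_1 : forall a b, 0 < b -> a < b -> a / b < 1.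
Proof. intros. apply Rmult_lt_reg_r with b; auto. unfold Rdiv. rewrite Rmult_assoc, Rinv_l; lra. Qed.

Lemma archi_inv : forall eps, 0 < eps -> exists N : nat, / (INR N + 1) < eps.
Proof.
  intros. destruct (INR_unbounded (/ eps)) as [N hN]. exists N.
  pose proof (pos_INR N).
  rewrite <- (Rinv_inv eps). apply Rinv_lt_contravar.
  apply Rmult_lt_0_compat. apply Rinv_0_lt_compat; lra. lra. lra.
Qed.

Lemma inv_mono : forall n N : nat, (N <= n)%nat -> / (INR n + 1) <= / (INR N + 1).
Proof.
  intros. apply Rinv_le_contravar. pose proof (pos_INR N); lra.
  apply le_INR in H. lra.
Qed.

Lemma eps_le : forall a b, (forall e, 0 < e -> a <= b + e) -> a <= b.
Proof.
  intros. destruct (Rle_dec a b) as [h|h]; auto.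
  specialize (H ((a - b)/2)). lra.
Qed.

Set Default Proof Using "All".
Section Gen2.
Variable V : IPS.
Hypothesis hV : is_real_hilbert V.

Lemma conv_tail : forall (u : nat -> V) x N, converges u x -> converges (fun n => u (n + N)%nat) x.
Proof.
  intros u x N h eps he. destruct (h eps he) as [M hM]. exists M. intros n hn.
  apply hM. lia.
Qed.

Lemma conv_inner : forall (u : nat -> V) x, converges u x -> forall c eps, 0 < eps ->
  exists N, forall n, (N <= n)%nat -> inner c (u n) <= inner c x + eps.
Proof.
  intros u x h c eps he.
  pose proof (nrm_nonneg V hV c).
  assert (he' : 0 < eps / (nrm c + 1)) by (apply Rdiv_lt_0_compat; lra).
  destruct (h _ he') as [N hN]. exists N. intros n hn. specialize (hN n hn).
  assert (hc := cauchy_schwarz V hV c (vsub (u n) x)).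
  iexp hV.
  assert (nrm c * nrm (vsub (u n) x) <= nrm c * (eps / (nrm c + 1))).
  { apply Rmult_le_compat_l; lra. }
  assert (nrm c * (eps / (nrm c + 1)) <= eps).
  { apply Rmult_le_reg_r with (nrm c + 1). lra. field_simplify. lra. lra. }
  revert hc. iexp hV. intro hc. lra.
Qed.

Lemma real_stepA : forall r D rho K, 0 < r -> r < D -> 0 < rho ->
  K = (2 / r + rho * r / 2) ^ 2 / (2 * rho) + 2 ->
  2 <= (r / D) * K + rho / 2 * (r / D) * (1 - r / D) * D ^ 2.
Proof.
  intros r D rho K hr hD hrho hK.
  set (A := 2 / r + rho * r / 2).
  assert (hK2 : K + rho * D ^ 2 / 2 - A * D >= 2).
  { rewrite hK. fold A.
    assert (e : A ^ 2 / (2 * rho) + 2 + rho * D ^ 2 / 2 - A * D = (A - rho * D) ^ 2 / (2 * rho) + 2)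
      by (field; lra).
    rewrite e. assert (0 <= (A - rho * D) ^ 2 / (2 * rho)).
    { apply Rdiv_le_0_compat. apply pow2_ge_0. lra. } lra. }
  assert (e2 : (r / D) * K + rho / 2 * (r / D) * (1 - r / D) * D ^ 2 =
               (r / D) * (K + rho * D ^ 2 / 2 - A * D) + 2).
  { unfold A. field. lra. }
  rewrite e2. assert (0 < r / D) by (apply Rdiv_lt_0_compat; lra). nra.
Qed.

Section Fun.
Variable h : V -> ER.
Variable rho : R.
Hypothesis hp : proper h.
Hypothesis hl : lsc h.
Hypothesis hrho : 0 < rho.
Hypothesis hs : strongly_convex rho h.

Lemma sc_bound : forall u : V, exists M, forall x a, h x = ERfin a -> inner u x - a <= M.
Proof.
  intro u. apply NNPP. intro hn.
  assert (hun : forall M, exists x a, h x = ERfin a /\ inner u x - a > M).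
  { intro M. apply NNPP. intro h1. apply hn. exists M. intros x a hx.
    apply Rnot_gt_le. intro h2. apply h1. exists x, a. auto. }
  destruct hp as [x0 [a0 ha0]].
  set (c0 := a0 - inner u x0).
  assert (stepA : forall r, 0 < r -> exists z a, h z = ERfin a /\ nrm (vsub z x0) <= r /\ a - inner u z <= c0 - 2).
  { intros r hr.
    set (K := (2 / r + rho * r / 2) ^ 2 / (2 * rho) + 2).
    assert (hK : 2 <= K).
    { unfold K. assert (0 <= (2 / r + rho * r / 2) ^ 2 / (2 * rho)).
      apply Rdiv_le_0_compat. apply pow2_ge_0. lra. lra. }
    destruct (hun (K - c0)) as [y [ay [hy hy2]]].
    set (D := nrm (vsub y x0)).
    destruct (Rle_dec D r) as [hD|hD].
    - exists y, ay. split; auto. split; auto. lra.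
    - assert (hD' : r < D) by lra.
      set (l := r / D).
      assert (hl0 : 0 < l) by (apply Rdiv_lt_0_compat; lra).
      assert (hl1 : l < 1) by (unfold l; apply Rdiv_lt_1; lra).
      destruct (hs y x0 l ay a0 (conj hl0 hl1) hy ha0) as [c [hc hc2]].
      exists (vadd (vscal l y) (vscal (1 - l) x0)), c. split; auto. split.
      + apply (nrm_le_sq V hV). lra.
        assert (e : inner (vsub (vadd (vscal l y) (vscal (1 - l) x0)) x0)
                           (vsub (vadd (vscal l y) (vscal (1 - l) x0)) x0) = l ^ 2 * D ^ 2).
        { unfold D. rewrite (nrm_sq V hV). iexp hV. rewrite (inner_sym V hV x0 y). ring. }
        rewrite e. unfold l. right. field. lra.
      + fold D in hc2.
        assert (hA := real_stepA r D rho K hr hD' hrho eq_refl). fold l in hA.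
        revert hc2. iexp hV. intro hc2.
        assert (l * (ay - inner u y) <= l * (c0 - K)). { apply Rmult_le_compat_l; lra. }
        unfold c0 in *. lra. }
  set (zf := fun n : nat => epsilon (inhabits vzero) (fun z => exists a, h z = ERfin a /\
               nrm (vsub z x0) <= / (INR n + 1) /\ a - inner u z <= c0 - 2)).
  assert (hzf : forall n, exists a, h (zf n) = ERfin a /\ nrm (vsub (zf n) x0) <= / (INR n + 1) /\
                  a - inner u (zf n) <= c0 - 2).
  { intro n. unfold zf. apply epsilon_spec. apply stepA.
    apply Rinv_0_lt_compat. pose proof (pos_INR n). lra. }
  assert (hconv : converges zf x0).
  { intros eps he. destruct (archi_inv eps he) as [N hN]. exists N. intros n hnn.
    destruct (hzf n) as [a [_ [h2 _]]]. pose proof (inv_mono n N hnn). lra. }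
  destruct (conv_inner zf x0 hconv u 1 Rlt_0_1) as [N1 hN1].
  destruct (hl (fun n => zf (n + N1)%nat) x0 (a0 - 1) (conv_tail zf x0 N1 hconv)) as [b [hb1 hb2]].
  - intro n. destruct (hzf (n + N1)%nat) as [a [h1 [_ h3]]]. exists a. split; auto.
    specialize (hN1 (n + N1)%nat ltac:(lia)). unfold c0 in h3. lra.
  - rewrite ha0 in hb1. injection hb1. intro; subst. lra.
Qed.

Definition is_max (u x0 : V) (a0 : R) : Prop :=
  h x0 = ERfin a0 /\ forall x a, h x = ERfin a -> inner u x - a <= inner u x0 - a0.

Lemma exist_max : forall u : V, exists x0 a0, is_max u x0 a0.
Proof.
  intro u. destruct (sc_bound u) as [M hM].
  set (E := fun r => exists x a, h x = ERfin a /\ r = inner u x - a).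
  destruct (completeness E) as [s [hs1 hs2]].
  { exists M. intros r [x [a [hx ->]]]. apply hM; auto. }
  { destruct hp as [x [a ha]]. exists (inner u x - a). exists x, a. auto. }
  assert (hnear : forall n : nat, exists x a, h x = ERfin a /\ inner u x - a > s - / (INR n + 1)).
  { intro n. apply NNPP. intro hn.
    assert (hb : is_upper_bound E (s - / (INR n + 1))).
    { intros r [x [a [hx ->]]]. apply Rnot_gt_le. intro h2. apply hn. exists x, a. auto. }
    specialize (hs2 _ hb). assert (0 < / (INR n + 1)). apply Rinv_0_lt_compat. pose proof (pos_INR n). lra. lra. }
  set (xs := fun n : nat => epsilon (inhabits vzero) (fun x => exists a, h x = ERfin a /\ inner u x - a > s - / (INR n + 1))).
  assert (hxs : forall n, exists a, h (xs n) = ERfin a /\ inner u (xs n) - a > s - / (INR n + 1)).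
  { intro n. unfold xs. apply epsilon_spec. apply hnear. }
  assert (hcau : cauchy xs).
  { intros eps he.
    destruct (archi_inv (rho * eps ^ 2 / 8)) as [N hN].
    { apply Rdiv_lt_0_compat. apply Rmult_lt_0_compat. lra. nra. lra. }
    exists N. intros n k hn hk.
    destruct (hxs n) as [an [hn1 hn2]]. destruct (hxs k) as [ak [hk1 hk2]].
    assert (hl0 : 0 < 1/2 < 1) by lra.
    destruct (hs (xs n) (xs k) (1/2) an ak hl0 hn1 hk1) as [c [hc hc2]].
    assert (hE := hs1 _ (ex_intro _ _ (ex_intro _ c (conj hc eq_refl)))).
    rewrite (nrm_sq V hV) in hc2.
    assert (hE' : 1 / 2 * inner u (xs n) + (1 - 1 / 2) * inner u (xs k) - c <= s).
    { revert hE. iexp hV. auto. }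
    clear hE.
    apply (nrm_lt_sq V hV). lra.
    pose proof (inv_mono n N hn). pose proof (inv_mono k N hk).
    set (D2 := inner (vsub (xs n) (xs k)) (vsub (xs n) (xs k))) in *.
    assert (rho / 8 * D2 < rho / 8 * eps ^ 2). { lra. }
    apply Rmult_lt_reg_l with (rho / 8). lra. exact H1. }
  destruct (complete V hV xs hcau) as [xst hconv].
  assert (hdom : exists b, h xst = ERfin b /\ forall e, 0 < e -> b <= inner u xst - s + 2 * e).
  { assert (key : forall e, 0 < e -> exists b, h xst = ERfin b /\ b <= inner u xst - s + 2 * e).
    { intros e he. destruct (conv_inner xs xst hconv u e he) as [N1 hN1].
      destruct (archi_inv e he) as [N2 hN2].
      apply (hl (fun n => xs (n + (N1 + N2))%nat) xst (inner u xst - s + 2 * e) (conv_tail xs xst _ hconv)).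
      intro n. destruct (hxs (n + (N1 + N2))%nat) as [a [h1 h2]]. exists a. split; auto.
      specialize (hN1 (n + (N1 + N2))%nat ltac:(lia)).
      pose proof (inv_mono (n + (N1 + N2)) N2 ltac:(lia)). lra. }
    destruct (key 1 Rlt_0_1) as [b [hb _]]. exists b. split; auto.
    intros e he. destruct (key e he) as [b' [hb' hb'2]]. rewrite hb in hb'. injection hb'. intros ->. auto. }
  destruct hdom as [b [hb hb2]].
  assert (hb3 : b <= inner u xst - s).
  { apply eps_le. intros e he. specialize (hb2 (e / 2) ltac:(lra)). lra. }
  exists xst, b. split; auto. intros x a hx.
  assert (hE := hs1 _ (ex_intro _ _ (ex_intro _ a (conj hx eq_refl)))). lra.
Qed.

Lemma strong_at_max : forall u x0 a0, is_max u x0 a0 -> forall x a, h x = ERfin a ->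
  (a - inner u x) - (a0 - inner u x0) >= rho / 2 * nrm (vsub x x0) ^ 2.
Proof.
  intros u x0 a0 [h0 hm] x a hx.
  assert (hd := hm x a hx).
  set (D2 := nrm (vsub x x0) ^ 2).
  set (dp := (a - inner u x) - (a0 - inner u x0)).
  apply Rnot_lt_ge. intro hc.
  assert (hD2 : 0 < D2).
  { destruct (pow2_ge_0 (nrm (vsub x x0))) as [h1|h1]; [exact h1|].
    unfold D2 in hc; rewrite <- h1 in hc. unfold dp in *; lra. }
  assert (hrD : 0 < rho * D2) by (apply Rmult_lt_0_compat; lra).
  set (l := (rho / 2 * D2 - dp) / (rho * D2)).
  assert (hl0 : 0 < l). { unfold l. apply Rdiv_lt_0_compat. lra. lra. }
  assert (el : l * (rho * D2) = rho / 2 * D2 - dp) by (unfold l; field; lra).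
  assert (hl1 : l <= 1/2). { apply Rmult_le_reg_r with (rho * D2). lra.
    rewrite el. unfold dp in *. lra. }
  destruct (hs x x0 l a a0 ltac:(lra) hx h0) as [c [hc1 hc2]].
  assert (hm2 := hm _ _ hc1). fold D2 in hc2.
  revert hm2. iexp hV. intro hm2.
  assert (hk : l * dp >= rho / 2 * l * (1 - l) * D2) by (unfold dp; lra).
  assert (hk2 : rho / 2 * (1 - l) * D2 <= dp).
  { apply Rmult_le_reg_l with l. lra. lra. }
  assert (e : rho / 2 * (1 - l) * D2 = rho / 2 * D2 - (rho / 2 * D2 - dp) / 2).
  { unfold l. field. lra. }
  lra.
Qed.

Lemma Rsup_eq : forall E s, is_lub E s -> Rsup E = s.
Proof.
  intros E s hs1. unfold Rsup.
  assert (hx := epsilon_spec (inhabits 0) (fun s => is_lub E s) (ex_intro _ s hs1)).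
  destruct hx as [a1 a2]. destruct hs1 as [b1 b2].
  apply Rle_antisym; auto.
Qed.

Lemma fconj_at_max : forall u x0 a0, is_max u x0 a0 -> fconj h u = inner u x0 - a0.
Proof.
  intros u x0 a0 [h0 hm]. unfold fconj. apply Rsup_eq. split.
  - intros r [x [a [hx ->]]]. apply hm; auto.
  - intros b hb. apply hb. exists x0, a0. auto.
Qed.

Lemma fconj_ge : forall u x a, h x = ERfin a -> inner u x - a <= fconj h u.
Proof.
  intros u x a hx. destruct (exist_max u) as [x0 [a0 hm]].
  rewrite (fconj_at_max u x0 a0 hm). apply hm; auto.
Qed.

Lemma fconj_lower : forall u u' x0 a0, is_max u x0 a0 ->
  fconj h u + inner (vsub u' u) x0 <= fconj h u'.
Proof.
  intros u u' x0 a0 hm. rewrite (fconj_at_max u x0 a0 hm).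
  assert (hh := fconj_ge u' x0 a0 (proj1 hm)). iexp hV. lra.
Qed.

Lemma fconj_upper : forall u u' x0 a0, is_max u x0 a0 ->
  fconj h u' <= fconj h u + inner (vsub u' u) x0 + inner (vsub u' u) (vsub u' u) / (2 * rho).
Proof.
  intros u u' x0 a0 hm. rewrite (fconj_at_max u x0 a0 hm).
  destruct (exist_max u') as [x1 [a1 hm1]].
  rewrite (fconj_at_max u' x1 a1 hm1).
  assert (hs1 := strong_at_max u x0 a0 hm x1 a1 (proj1 hm1)).
  rewrite (nrm_sq V hV) in hs1.
  assert (hy := young V hV (vsub u' u) (vsub x1 x0) rho hrho).
  revert hs1 hy. iexp hV. intros hs1 hy. lra.
Qed.

End Fun.
End Gen2.

Lemma fsum_ext : forall m (f g : Fin.t m -> R), (forall i, f i = g i) -> fsum m f = fsum m g.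
Proof. intros. f_equal. apply functional_extensionality. auto. Qed.

Lemma fsum_add : forall m (f g : Fin.t m -> R), fsum m (fun i => f i + g i) = fsum m f + fsum m g.
Proof. induction m; intros; simpl. ring. rewrite IHm. ring. Qed.

Lemma fsum_scal : forall m a (f : Fin.t m -> R), fsum m (fun i => a * f i) = a * fsum m f.
Proof. induction m; intros; simpl. ring. rewrite IHm. ring. Qed.

Lemma fsum_nonneg : forall m (f : Fin.t m -> R), (forall i, 0 <= f i) -> 0 <= fsum m f.
Proof. induction m; intros; simpl. lra. pose proof (H Fin.F1). pose proof (IHm (fun i => f (Fin.FS i)) (fun i => H (Fin.FS i))). lra. Qed.

Lemma fsum_zero : forall m (f : Fin.t m -> R), (forall i, 0 <= f i) -> fsum m f = 0 -> forall i, f i = 0.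
Proof.
  induction m; intros f hf hs i.
  - inversion i.
  - simpl in hs. pose proof (hf Fin.F1).
    pose proof (fsum_nonneg m (fun i => f (Fin.FS i)) (fun i => hf (Fin.FS i))).
    assert (h1 : f Fin.F1 = 0) by lra.
    assert (h2 : fsum m (fun i => f (Fin.FS i)) = 0) by lra.
    revert hf h1 h2. pattern i. apply Fin.caseS'; intros; auto.
    apply (IHm (fun i => f (Fin.FS i))); auto.
Qed.

Lemma euclid_hilbert_alg : forall m,
  let V := Euclid m in
  (forall x y z : V, vadd x (vadd y z) = vadd (vadd x y) z) /\
  (forall x y : V, vadd x y = vadd y x) /\
  (forall x : V, vadd x vzero = x) /\
  (forall x : V, vadd x (vopp x) = vzero) /\
  (forall (a b : R) (x : V), vscal a (vscal b x) = vscal (a * b) x) /\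
  (forall x : V, vscal 1 x = x) /\
  (forall (a : R) (x y : V), vscal a (vadd x y) = vadd (vscal a x) (vscal a y)) /\
  (forall (a b : R) (x : V), vscal (a + b) x = vadd (vscal a x) (vscal b x)) /\
  (forall x y : V, inner x y = inner y x) /\
  (forall x y z : V, inner (vadd x y) z = inner x z + inner y z) /\
  (forall (a : R) (x y : V), inner (vscal a x) y = a * inner x y) /\
  (forall x : V, 0 <= inner x x) /\
  (forall x : V, inner x x = 0 -> x = vzero).
Proof.
  intros m V.
  repeat split; intros; simpl; try (apply functional_extensionality; intros; ring).
  - apply fsum_ext. intros; ring.
  - rewrite <- fsum_add. apply fsum_ext. intros; ring.
  - rewrite <- fsum_scal. apply fsum_ext. intros; ring.
  - apply fsum_nonneg. intros. apply Rle_0_sqr.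
  - apply functional_extensionality. intro i.
    assert (h := fsum_zero m (fun i => x i * x i) (fun i => Rle_0_sqr (x i)) H i).
    simpl in h. nra.
Qed.

Definition fcons {n} (a : R) (t : Fin.t n -> R) : Fin.t (S n) -> R :=
  fun i => Fin.caseS' i (fun _ => R) a t.

Lemma euclid_complete : forall m (u : nat -> Euclid m), cauchy u -> exists x, converges u x.
Proof.
  induction m; intros u hu.
  - exists vzero. intros eps he. exists O. intros. unfold nrm. simpl. rewrite sqrt_0. auto.
  - set (u0 := fun n => u n Fin.F1).
    set (ut := fun n => (fun i => u n (Fin.FS i)) : Euclid m).
    assert (hsq : forall (a b : Euclid (S m)),
      inner (vsub a b) (vsub a b) = (a Fin.F1 - b Fin.F1) ^ 2 +
        inner (vsub (V := Euclid m) (fun i => a (Fin.FS i)) (fun i => b (Fin.FS i)))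
              (vsub (V := Euclid m) (fun i => a (Fin.FS i)) (fun i => b (Fin.FS i)))).
    { intros. simpl. ring. }
    assert (hnn : forall v : Euclid m, 0 <= inner v v).
    { intros. apply fsum_nonneg. intros. apply Rle_0_sqr. }
    assert (hc0 : Cauchy_crit u0).
    { intros eps he. destruct (hu eps he) as [N hN]. exists N. intros n k hn hk.
      specialize (hN n k hn hk). unfold R_dist, u0.
      assert (h := hsq (u n) (u k)). pose proof (hnn (vsub (V := Euclid m) (fun i => u n (Fin.FS i)) (fun i => u k (Fin.FS i)))).
      unfold nrm in hN. rewrite h in hN. eapply Rle_lt_trans; [|exact hN].
      rewrite <- sqrt_Rsqr_abs. apply sqrt_le_1_alt. unfold Rsqr. lra. }
    assert (hct : cauchy ut).
    { intros eps he. destruct (hu eps he) as [N hN]. exists N. intros n k hn hk.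
      specialize (hN n k hn hk). unfold nrm in *.
      assert (h := hsq (u n) (u k)).
      apply Rle_lt_trans with (sqrt (inner (vsub (u n) (u k)) (vsub (u n) (u k)))); auto.
      apply sqrt_le_1_alt. rewrite h. unfold ut. pose proof (pow2_ge_0 (u n Fin.F1 - u k Fin.F1)). lra. }
    destruct (R_complete u0 hc0) as [l0 hl0].
    destruct (IHm ut hct) as [lt hlt].
    exists (fcons l0 lt). intros eps he.
    assert (he2 : 0 < eps / 2) by lra.
    destruct (hl0 _ he2) as [N1 hN1]. destruct (hlt _ he2) as [N2 hN2].
    exists (N1 + N2)%nat. intros n hn.
    specialize (hN1 n ltac:(lia)). specialize (hN2 n ltac:(lia)).
    unfold R_dist, u0 in hN1. unfold nrm in *.
    assert (h := hsq (u n) (fcons l0 lt)).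
    change (fun i => fcons l0 lt (Fin.FS i)) with lt in h. change (fcons l0 lt Fin.F1) with l0 in h.
    change (fun i => u n (Fin.FS i)) with (ut n) in h.
    rewrite h.
    set (q := inner (vsub (ut n) lt) (vsub (ut n) lt)) in *.
    assert (hq : 0 <= q) by apply hnn.
    assert (q < (eps/2)^2).
    { pose proof (sqrt_pos q). rewrite <- (pow2_sqrt q hq). nra. }
    assert ((u n Fin.F1 - l0) ^ 2 < (eps/2)^2).
    { rewrite <- (pow2_abs (u n Fin.F1 - l0)).
      pose proof (Rabs_pos (u n Fin.F1 - l0)).
      set (a := Rabs (u n Fin.F1 - l0)) in *. 
      assert (0 < eps/2 - a) by lra. assert (0 < eps/2 + a) by lra.
      assert (0 < (eps/2 - a) * (eps/2 + a)) by (apply Rmult_lt_0_compat; lra). nra. }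
    rewrite <- (sqrt_pow2 eps) by lra. apply sqrt_lt_1_alt. split.
    pose proof (pow2_ge_0 (u n Fin.F1 - l0)). lra. nra.
Qed.

Lemma euclid_hilbert : forall m, is_real_hilbert (Euclid m).
Proof.
  intro m. destruct (euclid_hilbert_alg m) as (a1&a2&a3&a4&a5&a6&a7&a8&a9&a10&a11&a12&a13).
  unfold is_real_hilbert. repeat (split; [assumption|]). apply euclid_complete.
Qed.

Lemma step_alg (V : IPS) (hV : is_real_hilbert V) (y v hh z : V) (Fx Fy Fx' Fz a L : R) :
  0 < a < 1 -> 0 < L ->
  Fx' <= Fy + inner (vscal (L*a) hh) (vsub (vsub y (vscal a hh)) y)
        + L/2 * inner (vsub (vsub y (vscal a hh)) y) (vsub (vsub y (vscal a hh)) y) ->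
  Fy + inner (vscal (L*a) hh) (vsub (vsub (vscal (1+a) y) (vscal a v)) y)
     + L*a^2/2 * inner (vsub (vsub (vscal (1+a) y) (vscal a v)) y) (vsub (vsub (vscal (1+a) y) (vscal a v)) y) <= Fx ->
  Fy + inner (vscal (L*a) hh) (vsub z y) + L*a^2/2 * inner (vsub z y) (vsub z y) <= Fz ->
  Fx' - Fz + L*a^2/2 * inner (vsub (vsub (vadd (vscal a y) (vscal (1-a) v)) hh) z)
                            (vsub (vsub (vadd (vscal a y) (vscal (1-a) v)) hh) z)
  <= (1 - a) * (Fx - Fz + L*a^2/2 * inner (vsub v z) (vsub v z)).
Proof.
  intros ha hL HU Hx Hz.
  assert (N1 := inner_pos V hV (vsub y v)).
  assert (c1 : 0 <= (1 - a) * (L * a ^ 2 / 2) * a ^ 2) by (apply Rmult_le_pos; [apply Rmult_le_pos|]; [lra| |]; apply Rmult_le_pos; try apply pow2_ge_0; try (apply Rmult_le_pos; [lra|apply pow2_ge_0]); lra).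
  assert (c2 : 0 <= a * (1 - a) * (L * a ^ 2 / 2)).
  { apply Rmult_le_pos. apply Rmult_le_pos; lra. apply Rmult_le_pos. apply Rmult_le_pos. lra. apply pow2_ge_0. lra. }
  assert (P1 := Rmult_le_pos _ _ c1 N1). assert (P2 := Rmult_le_pos _ _ c2 N1).
  assert (Hx' : (1 - a) * (Fy + inner (vscal (L*a) hh) (vsub (vsub (vscal (1+a) y) (vscal a v)) y)
     + L*a^2/2 * inner (vsub (vsub (vscal (1+a) y) (vscal a v)) y) (vsub (vsub (vscal (1+a) y) (vscal a v)) y)) <= (1 - a) * Fx)
    by (apply Rmult_le_compat_l; lra).
  assert (Hz' : a * (Fy + inner (vscal (L*a) hh) (vsub z y) + L*a^2/2 * inner (vsub z y) (vsub z y)) <= a * Fz)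
    by (apply Rmult_le_compat_l; lra).
  clear Hx Hz.
  revert HU Hx' Hz' P1 P2. iexp hV.
  rewrite (inner_sym V hV v y), (inner_sym V hV hh y), (inner_sym V hV z y), (inner_sym V hV hh v),
    (inner_sym V hV z v), (inner_sym V hV z hh).
  intros. lra.
Qed.

Lemma step_alg2 (V : IPS) (hV : is_real_hilbert V) (x x' y v v' g hh z : V) (Fx Fy Fx' Fz a L k : R) :
  0 < a < 1 -> 0 < L -> k = L * a ^ 2 ->
  x = vsub (vscal (1+a) y) (vscal a v) ->
  x' = vsub y (vscal a hh) ->
  v' = vsub (vadd (vscal a y) (vscal (1-a) v)) hh ->
  g = vscal (L*a) hh ->
  Fx' <= Fy + inner g (vsub x' y) + L/2 * inner (vsub x' y) (vsub x' y) ->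
  Fy + inner g (vsub x y) + k/2 * inner (vsub x y) (vsub x y) <= Fx ->
  Fy + inner g (vsub z y) + k/2 * inner (vsub z y) (vsub z y) <= Fz ->
  Fx' - Fz + k/2 * inner (vsub v' z) (vsub v' z) <= (1 - a) * (Fx - Fz + k/2 * inner (vsub v z) (vsub v z)).
Proof.
  intros ha hL hk ex ex' ev' eg HU Hx Hz. subst.
  apply (step_alg V hV y v hh z Fx Fy Fx' Fz a L ha hL HU Hx Hz).
Qed.

Set Default Proof Using "All".
Section Gen3.
Variable V : IPS.
Hypothesis hV : is_real_hilbert V.

Lemma nrm_scal : forall a (x : V), nrm (vscal a x) = Rabs a * nrm x.
Proof.
  intros. unfold nrm. rewrite (inner_scall V hV), (inner_scalr V hV), <- Rmult_assoc.
  rewrite sqrt_mult_alt by apply Rle_0_sqr. change (a * a) with (Rsqr a). rewrite sqrt_Rsqr_abs. reflexivity.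
Qed.

Lemma nrm_eq0 : forall x : V, nrm x = 0 -> x = vzero.
Proof.
  intros. apply (inner_zero_eq V hV). unfold nrm in H. apply sqrt_eq_0 in H; auto. apply (inner_pos V hV).
Qed.

Lemma nrm_sub0 : forall x : V, nrm (vsub x vzero) = nrm x.
Proof. intros. unfold nrm. f_equal. iexp hV. ring. Qed.

Lemma nrm_triangle : forall a b : V, nrm (vadd a b) <= nrm a + nrm b.
Proof.
  intros. pose proof (nrm_nonneg V hV a). pose proof (nrm_nonneg V hV b).
  apply (nrm_le_sq V hV). lra.
  rewrite (inner_addl V hV), !(inner_addr V hV). rewrite (inner_sym V hV b a).
  pose proof (cauchy_schwarz V hV a b). rewrite <- !(nrm_sq V hV). nra.
Qed.
End Gen3.

Lemma Rabs_le_inv : forall x a, Rabs x <= a -> - a <= x <= a.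
Proof. intros. pose proof (Rle_abs x). pose proof (Rle_abs (- x)). rewrite Rabs_Ropp in H1. lra. Qed.

Section Grad.
Variable m : nat.
Let hE := euclid_hilbert m.

Lemma vsub_addK : forall p h : Euclid m, vsub (vadd p h) p = h.
Proof. intros. apply functional_extensionality. intro i. simpl. ring. Qed.

Lemma grad_of_bounds : forall (th : Euclid m -> R) p v C, 0 <= C ->
  (forall q, th p + inner v (vsub q p) <= th q) ->
  (forall q, th q <= th p + inner v (vsub q p) + C * inner (vsub q p) (vsub q p)) ->
  has_gradient th p v.
Proof.
  intros th p v C hC hl hu eps he.
  exists (eps / (C + 1)). split. apply Rdiv_lt_0_compat; lra.
  intros h [h1 h2].
  specialize (hl (vadd p h)). specialize (hu (vadd p h)). rewrite vsub_addK in hl, hu.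
  rewrite <- (nrm_sq _ hE) in hu.
  assert (C * nrm h ^ 2 <= eps * nrm h).
  { assert (nrm h * (C + 1) < eps).
    { apply Rmult_lt_reg_r with (/ (C + 1)). apply Rinv_0_lt_compat; lra.
      rewrite Rmult_assoc, Rinv_r by lra. lra. }
    assert (C * nrm h <= eps). { nra. } nra. }
  apply Rabs_le. split; lra.
Qed.

Lemma grad_unique : forall (th : Euclid m -> R) p v v', has_gradient th p v -> has_gradient th p v' -> v = v'.
Proof.
  intros th p v v' h1 h2.
  set (d := vsub v v').
  destruct (Req_dec (nrm d) 0) as [hd|hd].
  - apply nrm_eq0 in hd; auto. apply functional_extensionality. intro i.
    unfold d in hd. assert (e := f_equal (fun f => f i) hd). simpl in e. lra.
  - exfalso. pose proof (nrm_nonneg _ hE d). assert (hd' : 0 < nrm d) by lra.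
    destruct (h1 (nrm d / 4)) as [d1 [hd1 hh1]]. lra.
    destruct (h2 (nrm d / 4)) as [d2 [hd2 hh2]]. lra.
    set (t := Rmin d1 d2 / (2 * nrm d)).
    assert (ht : 0 < t). { unfold t. apply Rdiv_lt_0_compat. apply Rmin_pos; lra. lra. }
    set (h := vscal t d).
    assert (hn : nrm h = t * nrm d). { unfold h. rewrite (nrm_scal _ hE). rewrite Rabs_right; lra. }
    assert (hn2 : t * nrm d = Rmin d1 d2 / 2). { unfold t. field. lra. }
    pose proof (Rmin_l d1 d2). pose proof (Rmin_r d1 d2). pose proof (Rmin_pos d1 d2 hd1 hd2).
    specialize (hh1 h ltac:(lra)). specialize (hh2 h ltac:(lra)).
    apply Rabs_le_inv in hh1. apply Rabs_le_inv in hh2.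
    assert (e : inner v h - inner v' h = t * (nrm d) ^ 2).
    { unfold h. rewrite (nrm_sq _ hE). unfold d. iexp hE. rewrite (inner_sym _ hE v' v). ring. }
    assert (t * nrm d ^ 2 <= nrm d / 2 * (t * nrm d)) by (rewrite <- hn; lra).
    assert (0 < t * nrm d) by (apply Rmult_lt_0_compat; lra). nra.
Qed.

Lemma grad_eq : forall (th : Euclid m -> R) p v, has_gradient th p v -> grad th p = v.
Proof.
  intros. apply (grad_unique th p); auto. unfold grad. apply epsilon_spec. exists v; auto.
Qed.
End Grad.

Ltac vext := apply functional_extensionality; let i := fresh "i" in intro i; unfold vsub; simpl.

Lemma Rsup_eq0 : forall E s, is_lub E s -> Rsup E = s.
Proof.
  intros E s hs1. unfold Rsup.
  assert (hx := epsilon_spec (inhabits 0) (fun s => is_lub E s) (ex_intro _ s hs1)).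
  destruct hx as [a1 a2]. destruct hs1 as [b1 b2].
  apply Rle_antisym; auto.
Qed.

Set Default Proof Using "All".
Section Main.
Variables (H : IPS) (m : nat)
  (f : H -> ER) (g : Euclid m -> ER) (A : H -> Euclid m) (As : Euclid m -> H)
  (rho mu : R).
Hypotheses (hH : is_real_hilbert H)
  (hfp : proper f) (hfl : lsc f)
  (hrho : 0 < rho) (hfs : strongly_convex rho f)
  (hgp : proper g) (hgl : lsc g) (hmu : 0 < mu) (hgs : strongly_convex mu g)
  (hAl : linear_map A) (hAc : continuous_map A) (hAs : is_adjoint A As).

Let hE := euclid_hilbert m.

Definition SA := fun r => exists x : H, nrm x <= 1 /\ r = nrm (A x).

Lemma A_zero : A vzero = vzero.
Proof.
  destruct hAl as [hadd _]. pose proof (hadd vzero vzero) as e.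
  rewrite (vadd_0 H hH) in e. vext. assert (e' := f_equal (fun u => u i) e). simpl in e'. lra.
Qed.

Lemma A_scal : forall a x, A (vscal a x) = vscal a (A x).
Proof. destruct hAl as [_ h]. exact h. Qed.

Lemma SA_bound : bound SA.
Proof.
  apply NNPP. intro hn.
  assert (hun : forall M, exists x : H, nrm x <= 1 /\ nrm (A x) > M).
  { intro M. apply NNPP. intro h1. apply hn. exists M. intros r [x [hx ->]].
    apply Rnot_gt_le. intro h2. apply h1. exists x. auto. }
  set (xs := fun n : nat => epsilon (inhabits vzero) (fun x : H => nrm x <= 1 /\ nrm (A x) > INR n + 1)).
  assert (hxs : forall n, nrm (xs n) <= 1 /\ nrm (A (xs n)) > INR n + 1).
  { intro n. apply epsilon_spec. apply hun. }
  set (u := fun n => vscal (/ (INR n + 1)) (xs n)).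
  assert (hpos : forall n, 0 < / (INR n + 1)) by (intro; apply Rinv_0_lt_compat; pose proof (pos_INR n); lra).
  assert (hc : converges u vzero).
  { intros eps he. destruct (archi_inv eps he) as [N hN]. exists N. intros n hnn.
    unfold u. rewrite (nrm_sub0 H hH), (nrm_scal H hH), Rabs_right by (left; apply hpos).
    pose proof (inv_mono n N hnn). destruct (hxs n). pose proof (hpos n).
    pose proof (nrm_nonneg H hH (xs n)).
    assert (/ (INR n + 1) * nrm (xs n) <= / (INR n + 1)).
    { rewrite <- (Rmult_1_r (/ (INR n + 1))) at 2. apply Rmult_le_compat_l; lra. } lra. }
  destruct (hAc u vzero hc 1 Rlt_0_1) as [N hN]. specialize (hN N (Nat.le_refl N)).
  rewrite A_zero, (nrm_sub0 _ hE) in hN. unfold u in hN. rewrite A_scal, (nrm_scal _ hE) in hN.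
  rewrite Rabs_right in hN by (left; apply hpos).
  destruct (hxs N) as [_ h2].
  assert (h3 : / (INR N + 1) * (INR N + 1) < / (INR N + 1) * nrm (A (xs N))).
  { apply Rmult_lt_compat_l; auto. }
  rewrite Rinv_l in h3. lra. pose proof (pos_INR N). lra.
Qed.

Lemma op_lub : is_lub SA (op_norm A).
Proof.
  destruct (completeness SA SA_bound) as [s hs].
  { exists (nrm (A vzero)). exists vzero. split; auto. rewrite (nrm_zero H hH). lra. }
  unfold op_norm. fold SA. rewrite (Rsup_eq0 SA s hs). exact hs.
Qed.

Lemma op_nonneg : 0 <= op_norm A.
Proof.
  destruct op_lub as [h1 _]. apply Rle_trans with (nrm (A vzero)).
  apply (nrm_nonneg _ hE). apply h1. exists vzero. split; auto. rewrite (nrm_zero H hH). lra.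
Qed.

Lemma A_bound : forall x, nrm (A x) <= op_norm A * nrm x.
Proof.
  intro x. destruct (Req_dec (nrm x) 0) as [h0|h0].
  - rewrite (nrm_eq0 H hH x h0), A_zero, (nrm_zero _ hE), (nrm_zero H hH). lra.
  - pose proof (nrm_nonneg H hH x). assert (hx : 0 < nrm x) by lra.
    destruct op_lub as [h1 _].
    assert (h2 := h1 (nrm (A (vscal (/ nrm x) x)))).
    rewrite A_scal, (nrm_scal _ hE), Rabs_right in h2.
    2: { left. apply Rinv_0_lt_compat; auto. }
    assert (h3 : / nrm x * nrm (A x) <= op_norm A).
    { apply h2. exists (vscal (/ nrm x) x). split; [|rewrite A_scal, (nrm_scal _ hE), Rabs_right; auto].
      rewrite (nrm_scal H hH), Rabs_right. rewrite Rinv_l; lra. left. apply Rinv_0_lt_compat; auto.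
      left. apply Rinv_0_lt_compat; auto. }
    apply Rmult_le_reg_l with (/ nrm x). apply Rinv_0_lt_compat; auto.
    rewrite <- Rmult_assoc, (Rmult_comm (/ nrm x) (op_norm A)), Rmult_assoc, Rinv_l; lra.
Qed.

Lemma As_bound : forall p q : Euclid m,
  inner (vsub (As q) (As p)) (vsub (As q) (As p)) <= op_norm A ^ 2 * inner (vsub q p) (vsub q p).
Proof.
  intros p q. set (z := vsub (As q) (As p)).
  assert (e : inner z z = inner (A z) (vsub q p)).
  { unfold z at 2. rewrite (inner_subr H hH), (inner_subr _ hE), !hAs. reflexivity. }
  assert (h1 := cauchy_schwarz _ hE (A z) (vsub q p)).
  assert (h2 := A_bound z).
  pose proof (nrm_nonneg _ hE (vsub q p)). pose proof (nrm_nonneg H hH z). pose proof op_nonneg.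
  assert (h3 : nrm z ^ 2 <= op_norm A * nrm z * nrm (vsub q p)).
  { rewrite (nrm_sq H hH), e. apply Rle_trans with (1 := h1). apply Rmult_le_compat_r; auto. }
  assert (h4 : nrm z <= op_norm A * nrm (vsub q p)).
  { destruct (Req_dec (nrm z) 0) as [h0|h0]. rewrite h0. apply Rmult_le_pos; auto.
    apply Rmult_le_reg_l with (nrm z). lra. nra. }
  rewrite <- (nrm_sq H hH), <- (nrm_sq _ hE).
  assert (0 <= op_norm A * nrm (vsub q p)) by (apply Rmult_le_pos; auto).
  rewrite <- Rpow_mult_distr. apply pow_incr. lra.
Qed.

Definition xm (u : H) : H := epsilon (inhabits vzero) (fun x => exists a, is_max H f u x a).
Definition ym (v : Euclid m) : Euclid m := epsilon (inhabits vzero) (fun x => exists a, is_max (Euclid m) g v x a).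

Lemma xm_spec : forall u, exists a, is_max H f u (xm u) a.
Proof. intro u. unfold xm. apply epsilon_spec. apply (exist_max H hH f rho hfp hfl hrho hfs u). Qed.
Lemma ym_spec : forall v, exists a, is_max (Euclid m) g v (ym v) a.
Proof. intro v. unfold ym. apply epsilon_spec. apply (exist_max _ hE g mu hgp hgl hmu hgs v). Qed.

Definition G (p : Euclid m) : Euclid m := vsub (A (xm (As p))) (ym (vopp p)).
Definition Lp := op_norm A ^ 2 / rho + 1 / mu.

Lemma Lp_pos : 0 < Lp.
Proof.
  unfold Lp. assert (0 <= op_norm A ^ 2 / rho) by (apply Rdiv_le_0_compat; [apply pow2_ge_0|lra]).
  assert (0 < 1 / mu) by (apply Rdiv_lt_0_compat; lra). lra.
Qed.

Lemma th_lower : forall p q, theta f g As p + inner (G p) (vsub q p) <= theta f g As q.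
Proof.
  intros p q. destruct (xm_spec (As p)) as [a ha]. destruct (ym_spec (vopp p)) as [b hb].
  assert (h1 := fconj_lower H hH f rho hfp hfl hrho hfs (As p) (As q) _ _ ha).
  assert (h2 := fconj_lower _ hE g mu hgp hgl hmu hgs (vopp p) (vopp q) _ _ hb).
  unfold theta, G.
  rewrite (inner_subl H hH), (inner_sym H hH (As q)), (inner_sym H hH (As p)), <- !hAs in h1.
  revert h2. iexp hE. intro h2. rewrite (inner_sym _ hE q), (inner_sym _ hE p) in h2. lra.
Qed.

Lemma th_upper : forall p q, theta f g As q <= theta f g As p + inner (G p) (vsub q p)
   + Lp / 2 * inner (vsub q p) (vsub q p).
Proof.
  intros p q. destruct (xm_spec (As p)) as [a ha]. destruct (ym_spec (vopp p)) as [b hb].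
  assert (h1 := fconj_upper H hH f rho hfp hfl hrho hfs (As p) (As q) _ _ ha).
  assert (h2 := fconj_upper _ hE g mu hgp hgl hmu hgs (vopp p) (vopp q) _ _ hb).
  assert (h3 := As_bound p q).
  assert (h4 : inner (vsub (As q) (As p)) (vsub (As q) (As p)) / (2 * rho) <=
               op_norm A ^ 2 * inner (vsub q p) (vsub q p) / (2 * rho)).
  { apply Rmult_le_compat_r; auto. left. apply Rinv_0_lt_compat. lra. }
  assert (e : inner (vsub (vopp q) (vopp p)) (vsub (vopp q) (vopp p)) = inner (vsub q p) (vsub q p)).
  { iexp hE. ring. }
  rewrite e in h2.
  assert (e2 : Lp / 2 * inner (vsub q p) (vsub q p) =
     op_norm A ^ 2 * inner (vsub q p) (vsub q p) / (2 * rho) + inner (vsub q p) (vsub q p) / (2 * mu)).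
  { unfold Lp. field. lra. }
  rewrite e2. unfold theta, G.
  rewrite (inner_subl H hH (As q) (As p) (xm (As p))), (inner_sym H hH (As q)), (inner_sym H hH (As p)), <- !hAs in h1.
  revert h2 h4. iexp hE. intros h2 h4.
  rewrite (inner_sym _ hE q), (inner_sym _ hE p) in h2. lra.
Qed.

Lemma G_grad : forall p, grad (theta f g As) p = G p.
Proof.
  intro p. apply grad_eq. apply grad_of_bounds with (C := Lp / 2).
  pose proof Lp_pos. lra. apply th_lower. apply th_upper.
Qed.


Variables (kappa : R) (pstar : Euclid m) (Rr : R) (p w : nat -> Euclid m).
Hypotheses (hk : 0 < kappa) (hopt : forall q, theta f g As pstar <= theta f g As q)
  (hR : 0 < Rr) (hpR : nrm pstar <= Rr) (hfgm : fgm_iterates f g A As rho mu kappa p w).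

Definition F := theta_k f g As kappa.
Definition Gk (q : Euclid m) : Euclid m := vadd (G q) (vscal kappa q).
Definition LL := Lk A rho mu kappa.

Lemma LL_eq : LL = Lp + kappa.
Proof. reflexivity. Qed.

Lemma LL_pos : 0 < LL.
Proof. rewrite LL_eq. pose proof Lp_pos. lra. Qed.

Lemma F_lower : forall q0 q, F q0 + inner (Gk q0) (vsub q q0) + kappa / 2 * inner (vsub q q0) (vsub q q0) <= F q.
Proof.
  intros q0 q. assert (h := th_lower q0 q). unfold F, theta_k, Gk. rewrite !(nrm_sq _ hE).
  revert h. iexp hE. rewrite (inner_sym _ hE q0 q). intro h. lra.
Qed.

Lemma F_upper : forall q0 q, F q <= F q0 + inner (Gk q0) (vsub q q0) + LL / 2 * inner (vsub q q0) (vsub q q0).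
Proof.
  intros q0 q. assert (h := th_upper q0 q). rewrite LL_eq. unfold F, theta_k, Gk. rewrite !(nrm_sq _ hE).
  revert h. iexp hE. rewrite (inner_sym _ hE q0 q). intro h. lra.
Qed.

Lemma Gk_grad : forall q, grad F q = Gk q.
Proof.
  intro q. apply grad_eq. apply grad_of_bounds with (C := LL / 2).
  pose proof LL_pos. lra.
  - intro q1. pose proof (F_lower q q1). pose proof (inner_pos _ hE (vsub q1 q)).
    assert (0 <= kappa / 2 * inner (vsub q1 q) (vsub q1 q)) by (apply Rmult_le_pos; lra). lra.
  - intro q1. pose proof (F_upper q q1). lra.
Qed.

Definition al := sqrt (kappa / LL).

Lemma al_facts : 0 < al < 1 /\ LL * al ^ 2 = kappa /\ (sqrt LL - sqrt kappa) / (sqrt LL + sqrt kappa) = (1 - al) / (1 + al).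
Proof.
  pose proof LL_pos as hL. pose proof Lp_pos as hLp.
  assert (hq : 0 < kappa / LL < 1).
  { split. apply Rdiv_lt_0_compat; lra. apply Rdiv_lt_1; auto. rewrite LL_eq. lra. }
  split; [|split].
  - unfold al. split. apply sqrt_lt_R0; lra. rewrite <- sqrt_1. apply sqrt_lt_1_alt. lra.
  - unfold al. rewrite pow2_sqrt by lra. field. lra.
  - unfold al. rewrite sqrt_div_alt by lra.
    assert (0 < sqrt LL) by (apply sqrt_lt_R0; lra).
    assert (0 < sqrt kappa) by (apply sqrt_lt_R0; lra).
    field. split; lra.
Qed.

Definition vs (k : nat) : Euclid m :=
  match k with
  | O => vzero
  | S k' => vadd (p k') (vscal (1 / al) (vsub (p (S k')) (p k')))
  end.

Lemma fgm_parts : p O = vzero /\ w O = vzero /\ (forall k, p (S k) = vsub (w k) (vscal (1 / LL) (grad F (w k)))) /\ (forall k, w (S k) = vadd (p (S k))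
      (vscal ((sqrt LL - sqrt kappa) / (sqrt LL + sqrt kappa)) (vsub (p (S k)) (p k)))).
Proof. exact hfgm. Qed.

Lemma x_form : forall k, p k = vsub (vscal (1 + al) (w k)) (vscal al (vs k)).
Proof.
  destruct fgm_parts as (hp0 & hw0 & hpS & hwS).
  destruct al_facts as ([ha0 ha1] & _ & hb).
  intros [|k].
  - rewrite hp0, hw0. simpl vs. vext. ring.
  - rewrite hwS, hb. simpl vs. vext. field. split; lra.
Qed.

Definition Phi (k : nat) (z : Euclid m) : R :=
  F (p k) - F z + kappa / 2 * inner (vsub (vs k) z) (vsub (vs k) z).

Lemma lyap_step : forall k z, Phi (S k) z <= (1 - al) * Phi k z.
Proof.
  intros k z.
  destruct fgm_parts as (hp0 & hw0 & hpS & hwS).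
  destruct al_facts as ([ha0 ha1] & hLa & hb).
  pose proof LL_pos as hL.
  set (hh := vscal (1 / (LL * al)) (Gk (w k))).
  assert (ex' : p (S k) = vsub (w k) (vscal al hh)).
  { rewrite hpS, Gk_grad. unfold hh. vext. field. split; lra. }
  assert (ev' : vs (S k) = vsub (vadd (vscal al (w k)) (vscal (1 - al) (vs k))) hh).
  { change (vs (S k)) with (vadd (p k) (vscal (1 / al) (vsub (p (S k)) (p k)))).
    rewrite ex', (x_form k). vext. field. lra. }
  assert (eg : Gk (w k) = vscal (LL * al) hh).
  { unfold hh. vext. field. split; lra. }
  unfold Phi.
  apply (step_alg2 _ hE (p k) (p (S k)) (w k) (vs k) (vs (S k)) (Gk (w k)) hh z
     (F (p k)) (F (w k)) (F (p (S k))) (F z) al LL kappa (conj ha0 ha1) hL (eq_sym hLa)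
     (x_form k) ex' ev' eg).
  - apply F_upper.
  - apply F_lower.
  - apply F_lower.
Qed.

Lemma lyap : forall z k, Phi k z <= (1 - al) ^ k * Phi O z.
Proof.
  intros z k. destruct al_facts as ([ha0 ha1] & _ & _).
  induction k.
  - simpl. lra.
  - apply Rle_trans with ((1 - al) * Phi k z). apply lyap_step.
    simpl. rewrite Rmult_assoc. apply Rmult_le_compat_l; lra.
Qed.

Lemma pow_exp : forall k, (1 - al) ^ k <= exp (- (INR k) * al).
Proof.
  destruct al_facts as ([ha0 ha1] & _ & _).
  induction k.
  - simpl. rewrite Ropp_0, Rmult_0_l, exp_0. lra.
  - rewrite S_INR. replace (- (INR k + 1) * al) with (- INR k * al + - al) by ring.
    rewrite exp_plus. simpl. rewrite Rmult_comm.
    pose proof (exp_ineq1_le (- al)).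
    apply Rmult_le_compat; try lra. apply pow_le. lra.
Qed.

Lemma exp_sq : forall k, exp (- (INR k / 2) * al) ^ 2 = exp (- (INR k) * al).
Proof.
  intro k. simpl. rewrite Rmult_1_r, <- exp_plus. f_equal. field.
Qed.

Lemma exp_le1 : forall k, exp (- (INR k) * al) <= 1.
Proof.
  intro k. destruct al_facts as ([ha0 ha1] & _ & _). rewrite <- exp_0.
  destruct (Req_dec (- INR k * al) 0) as [e|e]. rewrite e. lra.
  left. apply exp_increasing. pose proof (pos_INR k).
  assert (0 <= INR k * al) by (apply Rmult_le_pos; lra). lra.
Qed.

Lemma Delta_nonneg : 0 <= theta f g As vzero - theta f g As pstar.
Proof. pose proof (hopt vzero). lra. Qed.

Lemma F_ge_theta : forall q, theta f g As q <= F q.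
Proof.
  intro q. unfold F, theta_k. pose proof (pow2_ge_0 (nrm q)).
  assert (0 <= kappa / 2 * nrm q ^ 2) by (apply Rmult_le_pos; lra). lra.
Qed.

Lemma F_zero : F vzero = theta f g As vzero.
Proof. unfold F, theta_k. rewrite (nrm_zero _ hE). ring. Qed.

Lemma part1 : forall k : nat,
    theta f g As (p k) - theta f g As pstar <=
      kappa / 2 * Rr ^ 2
      + 25 / 8 * (theta f g As vzero - theta f g As pstar)
        * exp (- (INR k / 2) * sqrt (kappa / Lk A rho mu kappa)).
Proof.
  intro k. fold LL. fold al.
  destruct fgm_parts as (hp0 & hw0 & hpS & hwS).
  destruct al_facts as ([ha0 ha1] & _ & _).
  assert (h := lyap pstar k). unfold Phi in h. rewrite hp0 in h. change (vs O) with (@vzero (Euclid m)) in h.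
  rewrite F_zero in h.
  assert (e : inner (vsub vzero pstar) (vsub vzero pstar) = nrm pstar ^ 2).
  { rewrite (nrm_sq _ hE). iexp hE. ring. }
  rewrite e in h.
  assert (e2 : F pstar = theta f g As pstar + kappa / 2 * nrm pstar ^ 2) by reflexivity.
  rewrite e2 in h.
  pose proof (F_ge_theta (p k)).
  pose proof (inner_pos _ hE (vsub (vs k) pstar)).
  assert (0 <= kappa / 2 * inner (vsub (vs k) pstar) (vsub (vs k) pstar)) by (apply Rmult_le_pos; lra).
  pose proof Delta_nonneg.
  set (D := theta f g As vzero - theta f g As pstar) in *.
  assert (hpk := pow_exp k).
  set (E := exp (- (INR k / 2) * al)).
  assert (hE1 : exp (- INR k * al) <= E).
  { unfold E. destruct (Req_dec (INR k) 0) as [e0|e0]. rewrite e0. right. f_equal. field.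
    left. apply exp_increasing. pose proof (pos_INR k). assert (0 < INR k * al) by (apply Rmult_lt_0_compat; lra). lra. }
  assert (hEp : 0 < E) by apply exp_pos.
  assert (D * (1 - al) ^ k <= D * E) by (apply Rmult_le_compat_l; lra).
  assert (0 <= D * E) by (apply Rmult_le_pos; lra).
  assert (nrm pstar ^ 2 <= Rr ^ 2) by (apply pow_incr; split; [apply (nrm_nonneg _ hE)|auto]).
  assert (kappa / 2 * nrm pstar ^ 2 <= kappa / 2 * Rr ^ 2) by (apply Rmult_le_compat_l; lra).
  assert (((1 - al) ^ k) * (theta f g As vzero - (theta f g As pstar + kappa / 2 * nrm pstar ^ 2) + kappa / 2 * nrm pstar ^ 2) = D * (1 - al) ^ k) by (unfold D; ring).
  lra.
Qed.

Lemma sq_le : forall a b, 0 <= b -> a ^ 2 <= b ^ 2 -> a <= b.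
Proof.
  intros a b hb h. destruct (Rle_dec a b) as [h1|h1]; auto. exfalso.
  assert (0 < (a - b) * (a + b)) by (apply Rmult_lt_0_compat; lra). nra.
Qed.

Lemma near_min : forall d, 0 < d -> exists y, forall q, F y <= F q + d.
Proof.
  intros d hd.
  set (EF := fun r => exists q, r = - F q).
  destruct (completeness EF) as [s [hs1 hs2]].
  { exists (- theta f g As pstar). intros r [q ->]. pose proof (F_ge_theta q). pose proof (hopt q). lra. }
  { exists (- F vzero). exists vzero. auto. }
  assert (hex : exists y, - F y > s - d).
  { apply NNPP. intro hn. assert (hb : is_upper_bound EF (s - d)).
    { intros r [q ->]. apply Rnot_gt_le. intro h2. apply hn. exists q. auto. }
    specialize (hs2 _ hb). lra. }
  destruct hex as [y hy]. exists y. intro q. assert (hq := hs1 (- F q) (ex_intro _ q eq_refl)). lra.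
Qed.

Lemma cocoercive : forall x y, inner (vsub (G x) (G y)) (vsub (G x) (G y)) <=
  2 * Lp * (theta f g As x - theta f g As y - inner (G y) (vsub x y)).
Proof.
  intros x y. pose proof Lp_pos as hLp.
  set (e := vscal (/ Lp) (vsub (G x) (G y))).
  assert (ed : vsub (G x) (G y) = vscal Lp e). { unfold e. vext. field. lra. }
  assert (U := th_upper x (vsub x e)).
  assert (Lw := th_lower y (vsub x e)).
  assert (h1 : inner (vsub (G x) (G y)) e = Lp * inner e e) by (rewrite ed; iexp hE; ring).
  assert (h2 : inner (vsub (G x) (G y)) (vsub (G x) (G y)) = Lp * (Lp * inner e e)) by (rewrite ed; iexp hE; ring).
  rewrite h2. clear h2. clearbody e.
  revert U Lw h1. iexp hE. intros U Lw h1.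
  assert (Lp / 2 * inner e e <= theta f g As x - theta f g As y - (inner (G y) x - inner (G y) y)).
  { rewrite (inner_sym _ hE e x) in U. lra. }
  assert (2 * Lp * (Lp / 2 * inner e e) <= 2 * Lp * (theta f g As x - theta f g As y - (inner (G y) x - inner (G y) y)))
    by (apply Rmult_le_compat_l; lra).
  lra.
Qed.

Lemma part2 : forall k : nat,
    nrm (grad (theta f g As) (p k)) <=
      2 * sqrt (Lk A rho mu kappa * (theta f g As vzero - theta f g As pstar))
        * exp (- (INR k / 2) * sqrt (kappa / Lk A rho mu kappa))
      + 2 * kappa * Rr.
Proof.
  intro k. fold LL. fold al. rewrite G_grad.
  destruct fgm_parts as (hp0 & hw0 & hpS & hwS).
  destruct al_facts as ([ha0 ha1] & hLa & _).
  pose proof LL_pos as hL. pose proof Lp_pos as hLp. pose proof LL_eq as hLL.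
  pose proof Delta_nonneg as hD.
  set (D := theta f g As vzero - theta f g As pstar) in *.
  set (E := exp (- (INR k / 2) * al)).
  assert (hEp : 0 < E) by apply exp_pos.
  assert (hE2 : (1 - al) ^ k <= E ^ 2) by (unfold E; rewrite exp_sq; apply pow_exp).
  assert (hE3 : (1 - al) ^ k <= 1) by (eapply Rle_trans; [apply pow_exp|apply exp_le1]).
  assert (hpk0 : 0 <= (1 - al) ^ k) by (apply pow_le; lra).
  set (P := 2 * sqrt (LL * D) * E).
  assert (hLD : 0 <= LL * D) by (apply Rmult_le_pos; lra).
  assert (hP0 : 0 <= P) by (unfold P; apply Rmult_le_pos; [apply Rmult_le_pos; [lra|apply sqrt_pos]|lra]).
  assert (hP2 : P ^ 2 = 4 * LL * D * E ^ 2).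
  { unfold P. rewrite !Rpow_mult_distr. rewrite pow2_sqrt by lra. ring. }
  set (x := p k).
  set (Y := nrm (G x)).
  apply Rnot_lt_le. intro hY.
  set (eta := Y - (P + 2 * kappa * Rr)).
  assert (heta : 0 < eta) by (unfold eta; lra).
  assert (hc0 : 0 < eta ^ 2 / (8 * Lp * Rr)).
  { apply Rdiv_lt_0_compat. apply pow_lt; lra. apply Rmult_lt_0_compat; lra. }
  set (c := Rmin (kappa * Rr / 2) (eta ^ 2 / (8 * Lp * Rr))).
  assert (hc : 0 < c) by (apply Rmin_pos; [apply Rdiv_lt_0_compat; [apply Rmult_lt_0_compat|]|]; lra).
  assert (hc1 : c <= kappa * Rr / 2) by apply Rmin_l.
  assert (hc2 : c <= eta ^ 2 / (8 * Lp * Rr)) by apply Rmin_r.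
  set (d := Rmin (5 * kappa * Rr ^ 2 / 8) (c ^ 2 / (2 * LL))).
  assert (hd : 0 < d).
  { apply Rmin_pos. apply Rdiv_lt_0_compat; [|lra]. apply Rmult_lt_0_compat. lra. apply pow_lt; lra.
    apply Rdiv_lt_0_compat; [apply pow_lt|]; lra. }
  assert (hd1 : d <= 5 * kappa * Rr ^ 2 / 8) by apply Rmin_l.
  assert (hd2 : d <= c ^ 2 / (2 * LL)) by apply Rmin_r.
  destruct (near_min d hd) as [y hy].
  set (ga := nrm (Gk y)).
  assert (hga0 : 0 <= ga) by apply (nrm_nonneg _ hE).
  assert (hga : ga <= c).
  { set (q1 := vsub y (vscal (1 / LL) (Gk y))).
    assert (hu := F_upper y q1). assert (hq := hy q1).
    assert (e1 : inner (Gk y) (vsub q1 y) = - (1 / LL) * ga ^ 2).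
    { unfold ga. rewrite (nrm_sq _ hE). unfold q1. iexp hE. ring. }
    assert (e2 : inner (vsub q1 y) (vsub q1 y) = (1 / LL) ^ 2 * ga ^ 2).
    { unfold ga. rewrite (nrm_sq _ hE). unfold q1. iexp hE. ring. }
    rewrite e1, e2 in hu.
    assert (e3 : - (1 / LL) * ga ^ 2 + LL / 2 * ((1 / LL) ^ 2 * ga ^ 2) = - (ga ^ 2 / (2 * LL))) by (field; lra).
    assert (h4 : ga ^ 2 / (2 * LL) <= c ^ 2 / (2 * LL)) by lra.
    apply sq_le. lra.
    apply Rmult_le_reg_r with (/ (2 * LL)). apply Rinv_0_lt_compat; lra. exact h4. }
  set (ny := nrm y).
  assert (hny0 : 0 <= ny) by apply (nrm_nonneg _ hE).
  assert (hny : ny <= 3 * Rr / 2).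
  { assert (hq := hy pstar).
    assert (e1 : F y = theta f g As y + kappa / 2 * ny ^ 2) by reflexivity.
    assert (e2 : F pstar = theta f g As pstar + kappa / 2 * nrm pstar ^ 2) by reflexivity.
    pose proof (hopt y).
    assert (nrm pstar ^ 2 <= Rr ^ 2) by (apply pow_incr; split; [apply (nrm_nonneg _ hE)|auto]).
    assert (kappa / 2 * (ny ^ 2 - (3 * Rr / 2) ^ 2) <= 0).
    { assert (kappa / 2 * nrm pstar ^ 2 <= kappa / 2 * Rr ^ 2) by (apply Rmult_le_compat_l; lra). lra. }
    apply sq_le. lra.
    assert (ny ^ 2 - (3 * Rr / 2) ^ 2 <= 0).
    { apply Rmult_le_reg_l with (kappa / 2). lra. lra. } lra. }
  assert (hphi0 : Phi O y <= 2 * D + ga * ny).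
  { unfold Phi. rewrite hp0. change (vs O) with (@vzero (Euclid m)). rewrite F_zero.
    assert (hl := F_lower y vzero). rewrite F_zero in hl.
    assert (hcs := cauchy_schwarz _ hE (Gk y) y). fold ga ny in hcs.
    pose proof (F_ge_theta y). pose proof (hopt y).
    revert hl. iexp hE. intro hl. unfold D. lra. }
  assert (hly := lyap y k). unfold Phi at 1 in hly. fold x in hly.
  pose proof (inner_pos _ hE (vsub (vs k) y)).
  assert (0 <= kappa / 2 * inner (vsub (vs k) y) (vsub (vs k) y)) by (apply Rmult_le_pos; lra).
  assert (hFx : F x - F y <= E ^ 2 * (2 * D) + ga * ny).
  { assert ((1 - al) ^ k * Phi O y <= (1 - al) ^ k * (2 * D + ga * ny)) by (apply Rmult_le_compat_l; lra).
    assert ((1 - al) ^ k * (2 * D) <= E ^ 2 * (2 * D)) by (apply Rmult_le_compat_r; lra).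
    assert ((1 - al) ^ k * (ga * ny) <= ga * ny).
    { rewrite <- (Rmult_1_l (ga * ny)) at 2. apply Rmult_le_compat_r; [apply Rmult_le_pos|]; lra. }
    lra. }
  assert (hcc := cocoercive x y).
  assert (eQ : theta f g As x - theta f g As y - inner (G y) (vsub x y) =
     F x - F y - inner (Gk y) (vsub x y) - kappa / 2 * inner (vsub x y) (vsub x y)).
  { unfold F, theta_k, Gk. rewrite !(nrm_sq _ hE). iexp hE. rewrite (inner_sym _ hE y x). lra. }
  assert (hyo := young _ hE (vopp (Gk y)) (vsub x y) kappa hk).
  assert (eyo : inner (vopp (Gk y)) (vopp (Gk y)) = ga ^ 2).
  { unfold ga. rewrite (nrm_sq _ hE). iexp hE. ring. }
  rewrite eyo, (inner_oppl _ hE) in hyo.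
  set (dd := vsub (G x) (G y)) in *.
  assert (hdd : inner dd dd <= 2 * Lp * (E ^ 2 * (2 * D) + ga * ny + ga ^ 2 / (2 * kappa))).
  { rewrite eQ in hcc. apply Rle_trans with (1 := hcc). apply Rmult_le_compat_l. lra. lra. }
  assert (hGy : nrm (G y) <= ga + kappa * ny).
  { assert (e : G y = vadd (Gk y) (vscal (- kappa) y)) by (unfold Gk; vext; ring).
    rewrite e. eapply Rle_trans. apply (nrm_triangle _ hE). rewrite (nrm_scal _ hE).
    rewrite Rabs_Ropp, Rabs_right by lra. fold ga ny. lra. }
  assert (hGx : Y <= nrm dd + nrm (G y)).
  { assert (e : G x = vadd dd (G y)) by (unfold dd; vext; ring).
    unfold Y. rewrite e. apply (nrm_triangle _ hE). }
  set (Dn := nrm dd) in *.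
  assert (hDn0 : 0 <= Dn) by apply (nrm_nonneg _ hE).
  assert (hDn2 : Dn ^ 2 = inner dd dd) by apply (nrm_sq _ hE).
  assert (hGy2 : nrm (G y) <= 2 * kappa * Rr).
  { assert (kappa * ny <= kappa * (3 * Rr / 2)) by (apply Rmult_le_compat_l; lra). lra. }
  assert (hDlow : P + eta <= Dn) by (unfold eta; lra).
  assert (hDlow2 : P ^ 2 + eta ^ 2 <= Dn ^ 2).
  { assert (0 <= P * eta) by (apply Rmult_le_pos; lra).
    assert ((P + eta) ^ 2 <= Dn ^ 2) by (apply pow_incr; lra). nra. }
  assert (h1 : ga * ny <= c * (3 * Rr / 2)) by (apply Rmult_le_compat; lra).
  assert (h2 : ga ^ 2 <= c * (kappa * Rr / 2)).
  { simpl. rewrite Rmult_1_r. apply Rmult_le_compat; lra. }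
  assert (h3 : ga ^ 2 / (2 * kappa) <= c * Rr / 4).
  { apply Rmult_le_reg_r with (2 * kappa). lra.
    replace (ga ^ 2 / (2 * kappa) * (2 * kappa)) with (ga ^ 2) by (field; lra).
    replace (c * Rr / 4 * (2 * kappa)) with (c * (kappa * Rr / 2)) by field. exact h2. }
  assert (h4 : Lp * Rr * c <= eta ^ 2 / 8).
  { replace (eta ^ 2 / 8) with (Lp * Rr * (eta ^ 2 / (8 * Lp * Rr))) by (field; lra).
    apply Rmult_le_compat_l. apply Rmult_le_pos; lra. exact hc2. }
  assert (h5 : 2 * Lp * (E ^ 2 * (2 * D)) <= 4 * LL * D * E ^ 2).
  { assert (0 <= D * E ^ 2) by (apply Rmult_le_pos; [lra|apply pow2_ge_0]).
    rewrite hLL. nra. }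
  assert (h6 : 2 * Lp * (ga * ny + ga ^ 2 / (2 * kappa)) <= 2 * Lp * (c * (3 * Rr / 2) + c * Rr / 4))
    by (apply Rmult_le_compat_l; lra).
  assert (h7 : 2 * Lp * (c * (3 * Rr / 2) + c * Rr / 4) = 7 / 2 * (Lp * Rr * c)) by lra.
  assert (0 < eta ^ 2) by (apply pow_lt; lra).
  lra.
Qed.

End Main.


Theorem mainTheorem8 (H : IPS) (m : nat)
  (f : H -> ER) (g : Euclid m -> ER) (A : H -> Euclid m) (As : Euclid m -> H)
  (rho mu : R)
  (hH : is_real_hilbert H)
  (hfp : proper f) (hfc : convex f) (hfl : lsc f) (hfb : bounded_dom f)
  (hrho : 0 < rho) (hfs : strongly_convex rho f)
  (hgp : proper g) (hgl : lsc g) (hmu : 0 < mu) (hgs : strongly_convex mu g)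
  (hAl : linear_map A) (hAc : continuous_map A) (hAs : is_adjoint A As)
  (hdom : exists x, dom f x /\ dom g (A x))
  (pstar : Euclid m) (Rr : R)
  (hopt : forall p, theta f g As pstar <= theta f g As p)
  (hR : 0 < Rr) (hpR : nrm pstar <= Rr)
  (kappa : R) (hk : 0 < kappa)
  (p w : nat -> Euclid m)
  (hfgm : fgm_iterates f g A As rho mu kappa p w) :
  forall k : nat,
    theta f g As (p k) - theta f g As pstar <=
      kappa / 2 * Rr ^ 2
      + 25 / 8 * (theta f g As vzero - theta f g As pstar)
        * exp (- (INR k / 2) * sqrt (kappa / Lk A rho mu kappa))
    /\
    nrm (grad (theta f g As) (p k)) <=
      2 * sqrt (Lk A rho mu kappa * (theta f g As vzero - theta f g As pstar))
        * exp (- (INR k / 2) * sqrt (kappa / Lk A rho mu kappa))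
      + 2 * kappa * Rr.
Proof.
  intro k. split.
  - exact (part1 H m f g A As rho mu hH hfp hfl hrho hfs hgp hgl hmu hgs hAl hAc hAs
             kappa pstar Rr p w hk hopt hR hpR hfgm k).
  - exact (part2 H m f g A As rho mu hH hfp hfl hrho hfs hgp hgl hmu hgs hAl hAc hAs
             kappa pstar Rr p w hk hopt hR hpR hfgm k).
Qed.
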